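(* There is an absolute constant $C>0$ such that the following holds for all integers $k\ge 2$ (with $k$ even), all $\gamma\in(0,1]$ and all $\varepsilon\in(0,1]$. If $n\ge C\,k/(\gamma^2\varepsilon^2)$, then there exists a public-coin $\varepsilon$-LDP protocol with $n$ users, in which each user sends a single bit, together with a decision rule for the curator, that is a uniformity tester over $[k]$ with distance parameter $\gamma$. (In this protocol the shared randomness consists of $O(1)$ independent uniformly random subsets $S\subseteq[k]$ of cardinality $k/2$; a user assigned to subset $S$ sends the bit $\mathbf 1\{X\in S\}$ after flipping it with probability $1/(1+e^{\varepsilon})$.)
   Context: For a finite set $\Omega$, $\Delta(\Omega)$ denotes the set of probability distributions on $\Omega$, and $d_{TV}(p,q)=\sup_{S\subseteq\Omega}(p(S)-q(S))=\frac12\|p-q\|_1$. $u$ denotes the uniform distribution on $[k]=\{1,\dots,k\}$. Protocol model: there are $n$ users; user $j$ holds $X_j$, where $X_1,\dots,X_n$ are i.i.d. from an unknown distribution $p$. A public-coin protocol consists of a shared random variable $U$ independent of the samples, and for each user $j$ and each value $v$ of $U$ a channel (Markov kernel) $W_j^{v}$ from the data domain to a finite message set; user $j$ sends $Z_j\sim W_j^{U}(\cdot\mid X_j)$, independently across users given $U$ and the samples; the curator outputs a (possibly randomized) function of $(U,Z_1,\dots,Z_n)$. The protocol is private-coin if $U$ is constant, and symmetric if $W_j^v$ does not depend on $j$. It is $\varepsilon$-LDP if $W_j^v(z\mid x)\le e^{\varepsilon}W_j^v(z\mid x')$ for all $j,v,z,x,x'$. A uniformity tester over $[k]$ with distance parameter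 $\gamma$ is a protocol whose curator output, for every $p\in\Delta([k])$, equals ``uniform'' with probability at least $2/3$ if $p=u$, and equals ``not uniform'' with probability at least $2/3$ if $d_{TV}(p,u)>\gamma$ (probabilities over samples, shared and private randomness). *)

(* Defs.v *)
From Stdlib Require Import Reals List.
Import ListNotations.
Open Scope R_scope.

Fixpoint rsum (n : nat) (f : nat -> R) : R :=
  match n with O => 0 | S n' => rsum n' f + f n' end.

Fixpoint rprod (n : nat) (f : nat -> R) : R :=
  match n with O => 1 | S n' => rprod n' f * f n' end.

Definition lsum {A : Type} (l : list A) (f : A -> R) : R :=
  fold_right (fun a acc => f a + acc) 0 l.

Fixpoint bitvecs (n : nat) : list (list bool) :=
  match n with
  | O => [nil]
  | S n' => flat_map (fun l => [false :: l; true :: l]) (bitvecs n')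
  end.

Definition is_dist (k : nat) (p : nat -> R) : Prop :=
  (forall i, (i < k)%nat -> 0 <= p i) /\ rsum k p = 1.

Definition is_uniform (k : nat) (p : nat -> R) : Prop :=
  forall i, (i < k)%nat -> p i = / INR k.

Definition dTV_unif (k : nat) (p : nat -> R) : R :=
  / 2 * rsum k (fun i => Rabs (p i - / INR k)).

(* One-bit public-coin protocol with n users over data domain [k]:
   - shared randomness U takes values v in {0,...,m-1} with probabilities w v;
   - W j v x = probability that user j sends bit 1 (true) on input x when U = v
     (the channel W_j^v; bit 0 has probability 1 - W j v x);
   - D v z = probability that the curator outputs "uniform" given U = v and
     messages z (z is the bit vector (Z_1,...,Z_n), user j's bit is nth j z false). *)
Record protocol := {
  nshared : nat;
  wshared : nat -> R;
  chan : nat -> nat -> nat -> R;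
  decide : nat -> list bool -> R
}.

Definition valid_protocol (n k : nat) (P : protocol) : Prop :=
  (forall v, (v < nshared P)%nat -> 0 <= wshared P v) /\
  rsum (nshared P) (wshared P) = 1 /\
  (forall j v x, (j < n)%nat -> (v < nshared P)%nat -> (x < k)%nat ->
      0 <= chan P j v x <= 1) /\
  (forall v z, (v < nshared P)%nat -> 0 <= decide P v z <= 1).

Definition is_LDP (eps : R) (n k : nat) (P : protocol) : Prop :=
  forall j v x x', (j < n)%nat -> (v < nshared P)%nat -> (x < k)%nat -> (x' < k)%nat ->
    chan P j v x <= exp eps * chan P j v x' /\
    1 - chan P j v x <= exp eps * (1 - chan P j v x').

Definition prob_one (k : nat) (p : nat -> R) (P : protocol) (j v : nat) : R :=
  rsum k (fun x => p x * chan P j v x).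

Definition accept_prob (n k : nat) (p : nat -> R) (P : protocol) : R :=
  rsum (nshared P) (fun v =>
    wshared P v *
    lsum (bitvecs n) (fun z =>
      rprod n (fun j => if nth j z false then prob_one k p P j v
                        else 1 - prob_one k p P j v)
      * decide P v z)).

Definition uniformity_tester (n k : nat) (gamma : R) (P : protocol) : Prop :=
  forall p : nat -> R, is_dist k p ->
    (is_uniform k p -> accept_prob n k p P >= 2 / 3) /\
    (dTV_unif k p > gamma -> 1 - accept_prob n k p P >= 2 / 3).

(* Main.v *)
Require Import Defs.
From Stdlib Require Import Reals List Lia Lra FunctionalExtensionality.
Import ListNotations.
Open Scope R_scope.

Lemma rsum_ext n f g : (forall i, (i < n)%nat -> f i = g i) -> rsum n f = rsum n g.
Proof. induction n; simpl; intros H; auto. rewrite IHn, H; auto. Qed.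

Lemma rsum_plus n f g : rsum n (fun i => f i + g i) = rsum n f + rsum n g.
Proof. induction n; simpl; [lra|]. rewrite IHn; lra. Qed.

Lemma rsum_scal n c f : rsum n (fun i => c * f i) = c * rsum n f.
Proof. induction n; simpl; [lra|]. rewrite IHn; lra. Qed.

Lemma rsum_const n c : rsum n (fun _ => c) = INR n * c.
Proof. induction n; simpl rsum; [simpl; lra|]. rewrite IHn, S_INR; lra. Qed.

Lemma rsum_S n f : rsum (S n) f = f 0%nat + rsum n (fun i => f (S i)).
Proof. induction n; simpl in *; [lra|]. rewrite IHn; lra. Qed.

Lemma rsum_le n f g : (forall i, (i < n)%nat -> f i <= g i) -> rsum n f <= rsum n g.
Proof. induction n; simpl; intros H; [lra|]. apply Rplus_le_compat; auto. Qed.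

Lemma rsum_double M f : rsum (2 * M) f = rsum M (fun v => f (2 * v)%nat + f (2 * v + 1)%nat).
Proof.
  induction M; [reflexivity|].
  replace (2 * S M)%nat with (S (S (2 * M))) by lia.
  change (rsum (S (S (2*M))) f) with (rsum (2*M) f + f (2*M)%nat + f (S (2*M))).
  change (rsum (S M) (fun v => f (2 * v)%nat + f (2 * v + 1)%nat)) with
    (rsum M (fun v => f (2 * v)%nat + f (2 * v + 1)%nat) + (f (2 * M)%nat + f (2 * M + 1)%nat)).
  rewrite IHM. replace (2*M+1)%nat with (S (2*M)) by lia. lra.
Qed.

Lemma lsum_plus {A} (l : list A) f g : lsum l (fun a => f a + g a) = lsum l f + lsum l g.
Proof. induction l; unfold lsum in *; simpl; [lra|]. rewrite IHl; lra. Qed.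

Lemma lsum_scal {A} (l : list A) c f : lsum l (fun a => c * f a) = c * lsum l f.
Proof. induction l; unfold lsum in *; simpl; [lra|]. rewrite IHl; lra. Qed.

Lemma lsum_ext {A} (l : list A) f g : (forall a, f a = g a) -> lsum l f = lsum l g.
Proof. intros H; f_equal; apply functional_extensionality; auto. Qed.

Lemma lsum_bitvecs_S n f :
  lsum (bitvecs (S n)) f = lsum (bitvecs n) (fun l => f (false :: l) + f (true :: l)).
Proof.
  simpl. generalize (bitvecs n). induction l; unfold lsum in *; simpl; [lra|].
  rewrite IHl; lra.
Qed.

Lemma rprod_S n f : rprod (S n) f = f 0%nat * rprod n (fun i => f (S i)).
Proof. induction n; simpl in *; [lra|]. rewrite IHn; lra. Qed.

Definition Exp (q : nat -> R) (n : nat) (F : list bool -> R) : R :=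
  lsum (bitvecs n) (fun z => rprod n (fun j => if nth j z false then q j else 1 - q j) * F z).

Lemma Exp_0 q F : Exp q 0 F = F nil.
Proof. unfold Exp, lsum; simpl; lra. Qed.

Lemma Exp_S q n F : Exp q (S n) F =
  (1 - q 0%nat) * Exp (fun j => q (S j)) n (fun l => F (false :: l)) +
  q 0%nat * Exp (fun j => q (S j)) n (fun l => F (true :: l)).
Proof.
  unfold Exp. rewrite lsum_bitvecs_S, <- !lsum_scal, <- lsum_plus.
  apply lsum_ext; intros l. rewrite !rprod_S. simpl nth. lra.
Qed.

Lemma Exp_ext q n F G : (forall z, F z = G z) -> Exp q n F = Exp q n G.
Proof. intros H; f_equal; apply functional_extensionality; auto. Qed.

Lemma Exp_ext_q q q' n F : (forall j, (j < n)%nat -> q j = q' j) -> Exp q n F = Exp q' n F.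
Proof.
  revert q q' F; induction n; intros q q' F H; [rewrite !Exp_0; auto|].
  rewrite !Exp_S. rewrite (H 0%nat) by lia.
  rewrite (IHn (fun j => q (S j)) (fun j => q' (S j))) by (intros; apply H; lia).
  rewrite (IHn (fun j => q (S j)) (fun j => q' (S j)) (fun l => F (true :: l))) by (intros; apply H; lia).
  reflexivity.
Qed.

Lemma Exp_plus q n F G : Exp q n (fun z => F z + G z) = Exp q n F + Exp q n G.
Proof.
  revert q F G; induction n; intros; [rewrite !Exp_0; auto|].
  rewrite !Exp_S, !IHn. lra.
Qed.

Lemma Exp_scal q n c F : Exp q n (fun z => c * F z) = c * Exp q n F.
Proof.
  revert q F; induction n; intros; [rewrite !Exp_0; auto|].
  rewrite !Exp_S, !IHn. lra.
Qed.

Lemma Exp_const q n c : Exp q n (fun _ => c) = c.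
Proof.
  revert q; induction n; intros; [rewrite !Exp_0; auto|].
  rewrite !Exp_S, !IHn. lra.
Qed.

Lemma Exp_nonneg q n F : (forall j, (j < n)%nat -> 0 <= q j <= 1) -> (forall z, 0 <= F z) ->
  0 <= Exp q n F.
Proof.
  revert q F; induction n; intros q F Hq HF; [rewrite !Exp_0; auto|].
  rewrite Exp_S. assert (H0 := Hq 0%nat ltac:(lia)).
  assert (0 <= Exp (fun j => q (S j)) n (fun l => F (false :: l))) by (apply IHn; auto; intros; apply Hq; lia).
  assert (0 <= Exp (fun j => q (S j)) n (fun l => F (true :: l))) by (apply IHn; auto; intros; apply Hq; lia).
  nra.
Qed.

Lemma Exp_mono q n F G : (forall j, (j < n)%nat -> 0 <= q j <= 1) -> (forall z, F z <= G z) ->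
  Exp q n F <= Exp q n G.
Proof.
  intros Hq H. assert (0 <= Exp q n (fun z => G z + (-1) * F z)).
  { apply Exp_nonneg; auto. intros z; specialize (H z); lra. }
  rewrite Exp_plus, Exp_scal in H0. lra.
Qed.

Lemma Exp_split q a c G H :
  Exp q (a + c) (fun z => G (firstn a z) * H (skipn a z)) =
  Exp q a G * Exp (fun j => q (a + j)%nat) c H.
Proof.
  revert q G; induction a; intros q G.
  - rewrite Exp_0. simpl. rewrite Exp_scal. reflexivity.
  - simpl plus. rewrite !Exp_S. cbn [firstn skipn].
    rewrite (IHa (fun j => q (S j)) (fun l => G (false :: l))).
    rewrite (IHa (fun j => q (S j)) (fun l => G (true :: l))).
    simpl. lra.
Qed.
Fixpoint decode (N v : nat) : list bool :=
  match N with O => nil | S N' => Nat.odd v :: decode N' (Nat.div2 v) end.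

Lemma rsum_decode N F :
  rsum (2 ^ N) (fun v => / 2 ^ N * F (decode N v)) = Exp (fun _ => / 2) N F.
Proof.
  revert F; induction N; intros F.
  - rewrite Exp_0. simpl. lra.
  - change (2 ^ S N)%nat with (2 * 2 ^ N)%nat. rewrite rsum_double.
    rewrite Exp_S, <- !IHN, <- !rsum_scal, <- rsum_plus. apply rsum_ext; intros v _.
    cbn [decode]. rewrite Nat.odd_even, Nat.odd_odd, Nat.div2_double, Nat.div2_odd'.
    simpl pow. rewrite Rinv_mult. lra.
Qed.

Fixpoint cntb (z : list bool) : R :=
  match z with nil => 0 | b :: l => (if b then 1 else 0) + cntb l end.

Lemma Exp_var Q n : Exp (fun _ => Q) n (fun z => (cntb z - INR n * Q)^2) = INR n * Q * (1 - Q).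
Proof.
  induction n.
  - rewrite Exp_0. simpl. ring.
  - rewrite Exp_S, <- !Exp_scal, <- Exp_plus.
    rewrite (Exp_ext _ _ _ (fun l => (cntb l - INR n * Q)^2 + Q * (1 - Q))).
    + rewrite Exp_plus, Exp_const, IHn, S_INR. ring.
    + intros l. simpl cntb. rewrite S_INR. ring.
Qed.

Notation ExpH k F := (Exp (fun _ : nat => / 2) k F).

Lemma ExpH_S k F : ExpH (S k) F = ExpH k (fun l => / 2 * F (false :: l) + / 2 * F (true :: l)).
Proof.
  rewrite Exp_S, Exp_plus, !Exp_scal. replace (1 - /2) with (/2) by lra. reflexivity.
Qed.

Definition sg (b : bool) : R := if b then 1 else -1.
Definition Zd (d : nat -> R) k (s : list bool) : R := rsum k (fun x => d x * sg (nth x s false)).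

Lemma Zd_S d k b l : Zd d (S k) (b :: l) = d 0%nat * sg b + Zd (fun x => d (S x)) k l.
Proof. unfold Zd. rewrite rsum_S. reflexivity. Qed.

Lemma M2 k d : ExpH k (fun s => (Zd d k s)^2) = rsum k (fun x => d x ^ 2).
Proof.
  revert d; induction k; intros d.
  - rewrite Exp_0. unfold Zd; simpl; lra.
  - rewrite ExpH_S, rsum_S.
    rewrite (Exp_ext _ _ _ (fun l => (Zd (fun x => d (S x)) k l)^2 + d 0%nat ^ 2)).
    + rewrite Exp_plus, Exp_const.
      rewrite IHk. lra.
    + intros l. rewrite !Zd_S. unfold sg. field.
Qed.

Lemma M4 k d : ExpH k (fun s => (Zd d k s)^4) <= 3 * (rsum k (fun x => d x ^ 2))^2.
Proof.
  revert d; induction k; intros d.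
  - rewrite Exp_0. unfold Zd; simpl; lra.
  - rewrite ExpH_S, rsum_S.
    rewrite (Exp_ext _ _ _ (fun l => (Zd (fun x => d (S x)) k l)^4 +
         (6 * d 0%nat ^ 2) * (Zd (fun x => d (S x)) k l)^2 + d 0%nat ^ 4)).
    + rewrite !Exp_plus, Exp_const, Exp_scal.
      rewrite M2. specialize (IHk (fun x => d (S x))).
      set (s := rsum k (fun x => d (S x) ^ 2)) in *.
      assert (0 <= s). { apply (Rle_trans _ (rsum k (fun _ => 0))).
        rewrite rsum_const; lra. apply rsum_le; intros; nra. }
      assert (0 <= d 0%nat ^ 2) by nra. nra.
    + intros l. rewrite !Zd_S. unfold sg. field.
Qed.

Lemma PZ k d : let s := rsum k (fun x => d x ^ 2) in 0 < s ->
  ExpH k (fun σ => if Rle_dec (s / 2) ((Zd d k σ)^2) then 1 else 0) >= / 12.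
Proof.
  intros s Hs. set (P := ExpH k _).
  set (lam := / (6 * s)).
  assert (Hl : 0 < lam) by (unfold lam; apply Rinv_0_lt_compat; lra).
  assert (H1 : ExpH k (fun σ => (Zd d k σ)^2) <=
     ExpH k (fun σ => s / 2 + (lam / 2) * (Zd d k σ)^4 +
        / (2 * lam) * (if Rle_dec (s / 2) ((Zd d k σ)^2) then 1 else 0))).
  { apply Exp_mono. intros; lra. intros z. set (y := Zd d k z).
    assert (0 < / (2 * lam)) by (apply Rinv_0_lt_compat; lra).
    destruct (Rle_dec (s/2) (y^2)).
    - assert (y ^ 2 <= lam / 2 * y ^ 4 + / (2 * lam)); [|lra].
      assert (0 <= (lam * y^2 - 1)^2) by apply pow2_ge_0.
      assert (lam * / (2 * lam) = / 2) by (field; lra).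
      assert (y^4 = (y^2)^2) by ring.
      apply (Rmult_le_reg_l (2 * lam)); [lra|].
      replace (2 * lam * (lam / 2 * y ^ 4 + / (2 * lam))) with ((lam * y^2)^2 + 1) by (field; lra).
      nra.
    - assert (0 <= y^4) by (replace (y^4) with ((y^2)^2) by ring; nra).
      assert (0 <= lam/2 * y^4) by (apply Rmult_le_pos; lra). lra. }
  rewrite !Exp_plus, !Exp_scal, Exp_const, M2 in H1. fold s in H1. fold P in H1.
  assert (H4 := M4 k d). fold s in H4.
  assert (lam / 2 * ExpH k (fun σ => Zd d k σ ^ 4) <= lam / 2 * (3 * s^2)) by
    (apply Rmult_le_compat_l; lra).
  replace (lam / 2 * (3 * s ^ 2)) with (s / 4) in H by (unfold lam; field; lra).
  replace (/ (2 * lam)) with (3 * s) in H1 by (unfold lam; field; lra).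
  nra.
Qed.

Lemma cauchy_schwarz k d : (0 < k)%nat ->
  (rsum k (fun x => Rabs (d x)))^2 <= INR k * rsum k (fun x => d x ^ 2).
Proof.
  intros Hk. set (A := rsum k (fun x => Rabs (d x))).
  assert (HK : 0 < INR k) by (apply lt_0_INR; auto).
  set (M := A / INR k).
  assert (0 <= rsum k (fun x => (Rabs (d x) - M)^2)).
  { apply (Rle_trans _ (rsum k (fun _ => 0))). rewrite rsum_const; lra.
    apply rsum_le; intros; apply pow2_ge_0. }
  rewrite (rsum_ext _ _ (fun x => (d x ^ 2 + (-2 * M) * Rabs (d x)) + M^2)) in H.
  - rewrite !rsum_plus, rsum_scal, rsum_const in H. fold A in H.
    unfold M in H.
    assert (rsum k (fun x => d x ^ 2) - A^2 / INR k >= 0).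
    { replace (rsum k (fun x => d x ^ 2) - A^2 / INR k) with
        (rsum k (fun x => d x ^ 2) + -2 * (A / INR k) * A + INR k * (A / INR k) ^ 2) by (field; lra).
      lra. }
    assert (A^2 / INR k <= rsum k (fun x => d x ^ 2)) by lra.
    apply (Rmult_le_reg_l (/ INR k)). apply Rinv_0_lt_compat; lra.
    replace (/ INR k * (INR k * rsum k (fun x => d x ^ 2))) with (rsum k (fun x => d x ^ 2)) by (field; lra).
    lra.
  - intros i _. replace (d i ^ 2) with (Rabs (d i) ^ 2). ring.
    rewrite <- !Rsqr_pow2. symmetry. apply Rsqr_abs.
Qed.

Definition aeps eps := exp eps / (1 + exp eps).
Definition rr eps (b : bool) := if b then aeps eps else 1 - aeps eps.
Definition Qf eps k (p : nat -> R) σ := rsum k (fun x => p x * rr eps (nth x σ false)).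
Definition tf eps k σ := rsum k (fun x => / INR k * rr eps (nth x σ false)).
Definition test eps k b tau σ zb :=
  if Rle_dec ((cntb zb - INR b * tf eps k σ)^2) tau then 1 else 0.
Definition Gf eps k p b tau σ := Exp (fun _ => Qf eps k p σ) b (test eps k b tau σ).

Lemma aeps_range eps : 0 < aeps eps < 1.
Proof.
  unfold aeps. assert (0 < exp eps) by apply exp_pos. split.
  - apply Rdiv_lt_0_compat; lra.
  - apply (Rmult_lt_reg_r (1 + exp eps)); [lra|]. field_simplify; lra.
Qed.

Lemma rr_range eps b : 0 <= rr eps b <= 1.
Proof. destruct (aeps_range eps); destruct b; simpl; lra. Qed.

Lemma Qf_range eps k p σ : is_dist k p -> 0 <= Qf eps k p σ <= 1.
Proof.
  intros [Hp Hs]. unfold Qf. split.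
  - apply (Rle_trans _ (rsum k (fun _ => 0))). rewrite rsum_const; lra.
    apply rsum_le; intros i Hi. apply Rmult_le_pos; auto. apply rr_range.
  - rewrite <- Hs. apply rsum_le; intros i Hi. destruct (rr_range eps (nth i σ false)).
    specialize (Hp i Hi). nra.
Qed.

Lemma Q_minus_t eps k p σ : is_dist k p -> (0 < k)%nat ->
  Qf eps k p σ - tf eps k σ = (aeps eps - / 2) * Zd (fun x => p x - / INR k) k σ.
Proof.
  intros [Hp Hs] Hk. assert (HK : 0 < INR k) by (apply lt_0_INR; auto).
  unfold Qf, tf, Zd.
  transitivity (rsum k (fun x => / 2 * p x + (- / 2 * / INR k) +
       (aeps eps - / 2) * ((p x - / INR k) * sg (nth x σ false)))).
  - transitivity (rsum k (fun x => p x * rr eps (nth x σ false) + (-1) * (/ INR k * rr eps (nth x σ false)))).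
    { rewrite rsum_plus, (rsum_scal k (-1)). ring. }
    apply rsum_ext; intros i _.
    unfold rr, sg. destruct (nth i σ false); field; lra.
  - rewrite !rsum_plus, !rsum_scal, rsum_const, Hs. field. lra.
Qed.

Lemma far_pt x y tau : 0 < tau -> x^2 <= tau -> 4 * tau <= y^2 -> y^2 <= 4 * (x - y)^2.
Proof.
  intros Ht Hx Hy.
  destruct (Rle_dec 0 y).
  - assert (2 * x <= y) by nra. assert (-y <= 2 * x) by nra. nra.
  - assert (2 * x <= - y) by nra. assert (y <= 2 * x) by nra. nra.
Qed.

Lemma bq_le b Q : INR b * Q * (1 - Q) <= INR b / 4.
Proof.
  assert (0 <= INR b) by apply pos_INR. assert (0 <= (Q - /2)^2) by apply pow2_ge_0.
  assert (Q * (1 - Q) <= / 4) by nra.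
  rewrite Rmult_assoc. unfold Rdiv. apply Rmult_le_compat_l; auto.
Qed.

Lemma G_range eps k p b tau σ : is_dist k p -> 0 <= Gf eps k p b tau σ <= 1.
Proof.
  intros Hd. destruct (Qf_range eps k p σ Hd). unfold Gf. split.
  - apply Exp_nonneg. intros; lra. intros z; unfold test; destruct Rle_dec; lra.
  - rewrite <- (Exp_const (fun _ => Qf eps k p σ) b 1). apply Exp_mono. intros; lra.
    intros z; unfold test; destruct Rle_dec; lra.
Qed.

Lemma G_unif eps k p b tau σ : is_dist k p -> is_uniform k p -> 0 < tau ->
  1 - INR b / (4 * tau) <= Gf eps k p b tau σ.
Proof.
  intros Hd Hu Ht. destruct (Qf_range eps k p σ Hd) as [Q0 Q1].
  assert (Heq : tf eps k σ = Qf eps k p σ).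
  { unfold tf, Qf. apply rsum_ext; intros i Hi. rewrite Hu; auto. }
  set (Q := Qf eps k p σ) in *.
  assert (H : Exp (fun _ => Q) b (fun z => 1 + (-1) * test eps k b tau σ z) <=
              Exp (fun _ => Q) b (fun z => / tau * (cntb z - INR b * Q)^2)).
  { apply Exp_mono. intros; lra. intros z. unfold test. rewrite Heq.
    destruct Rle_dec as [h|h].
    - assert (0 <= / tau * (cntb z - INR b * Q) ^ 2).
      { apply Rmult_le_pos. left; apply Rinv_0_lt_compat; lra. apply pow2_ge_0. }
      lra.
    - apply (Rmult_le_reg_l tau); [lra|]. field_simplify; lra. }
  rewrite Exp_plus, Exp_scal, Exp_const, Exp_scal, Exp_var in H.
  unfold Gf. fold Q.
  assert (INR b * Q * (1 - Q) <= INR b / 4).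
  { apply bq_le. }
  assert (/ tau * (INR b * Q * (1 - Q)) <= INR b / (4 * tau)).
  { replace (INR b / (4 * tau)) with (/ tau * (INR b / 4)) by (field; lra).
    apply Rmult_le_compat_l; auto. left; apply Rinv_0_lt_compat; lra. }
  lra.
Qed.

Lemma G_far eps k p b tau σ : is_dist k p -> 0 < tau ->
  4 * tau <= INR b ^ 2 * (Qf eps k p σ - tf eps k σ) ^ 2 ->
  Gf eps k p b tau σ <= INR b / (INR b ^ 2 * (Qf eps k p σ - tf eps k σ) ^ 2).
Proof.
  intros Hd Ht HY. destruct (Qf_range eps k p σ Hd) as [Q0 Q1].
  set (Q := Qf eps k p σ) in *. set (t := tf eps k σ) in *.
  set (Y := INR b ^ 2 * (Q - t) ^ 2) in *.
  assert (HY0 : 0 < Y) by lra.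
  assert (H : Exp (fun _ => Q) b (test eps k b tau σ) <=
              Exp (fun _ => Q) b (fun z => (4 / Y) * (cntb z - INR b * Q)^2)).
  { apply Exp_mono. intros; lra. intros z. unfold test. fold t.
    destruct Rle_dec as [h|h].
    - assert (Y <= 4 * (cntb z - INR b * Q)^2).
      { replace (cntb z - INR b * Q) with ((cntb z - INR b * t) - INR b * (Q - t)) by ring.
        unfold Y. replace (INR b ^ 2 * (Q - t) ^ 2) with ((INR b * (Q - t))^2) by ring.
        apply far_pt with tau; auto. unfold Y in HY; nra. }
      apply (Rmult_le_reg_l Y); [lra|]. field_simplify; lra.
    - apply Rmult_le_pos. apply Rmult_le_pos; [lra|left; apply Rinv_0_lt_compat; lra].
      apply pow2_ge_0. }
  rewrite Exp_scal, Exp_var in H. unfold Gf. fold Q.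
  assert (INR b * Q * (1 - Q) <= INR b / 4).
  { apply bq_le. }
  assert (4 / Y * (INR b * Q * (1 - Q)) <= INR b / Y).
  { replace (INR b / Y) with (4 / Y * (INR b / 4)) by (field; lra).
    apply Rmult_le_compat_l; auto. unfold Rdiv. apply Rmult_le_pos; [lra|left; apply Rinv_0_lt_compat; lra]. }
  lra.
Qed.

Definition A1 eps k p b tau := ExpH k (Gf eps k p b tau).

Lemma A1_unif eps k p b tau : is_dist k p -> is_uniform k p -> 0 < tau ->
  1 - INR b / (4 * tau) <= A1 eps k p b tau.
Proof.
  intros. unfold A1. rewrite <- (Exp_const (fun _ => /2) k (1 - INR b / (4 * tau))).
  apply Exp_mono. intros; lra. intros; apply G_unif; auto.
Qed.

Lemma A1_range eps k p b tau : is_dist k p -> 0 <= A1 eps k p b tau <= 1.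
Proof.
  intros Hd. unfold A1. split.
  - apply Exp_nonneg. intros; lra. intros; apply G_range; auto.
  - rewrite <- (Exp_const (fun _ => /2) k 1). apply Exp_mono. intros; lra. intros; apply G_range; auto.
Qed.

Lemma A1_far eps k p b tau gamma mu2 : is_dist k p -> (0 < k)%nat -> 0 < gamma ->
  dTV_unif k p > gamma ->
  mu2 = (aeps eps - / 2)^2 * (2 * gamma^2 / INR k) -> 0 < mu2 -> (0 < b)%nat ->
  tau = INR b ^ 2 * mu2 / 4 ->
  INR b / (INR b ^ 2 * mu2) <= 1 ->
  A1 eps k p b tau <= 1 - (1 - INR b / (INR b ^ 2 * mu2)) / 12.
Proof.
  intros Hd Hk Hg Hdtv Hmu Hmu0 Hb Htau Heta.
  set (eta := INR b / (INR b ^ 2 * mu2)) in *.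
  assert (HK : 0 < INR k) by (apply lt_0_INR; auto).
  assert (HB : 0 < INR b) by (apply lt_0_INR; auto).
  set (d := fun x => p x - / INR k).
  set (s := rsum k (fun x => d x ^ 2)).
  assert (Hcs := cauchy_schwarz k d Hk). fold s in Hcs.
  assert (Hdtv2 : / 2 * rsum k (fun x => Rabs (d x)) > gamma) by exact Hdtv. clear Hdtv.
  assert (Hs : 4 * gamma ^ 2 < INR k * s).
  { set (A := rsum k (fun x => Rabs (d x))) in *.
    assert (2 * gamma < A) by lra. assert (0 < 2 * gamma) by lra.
    assert ((2 * gamma)^2 < A^2) by nra. nra. }
  assert (Hs0 : 0 < s). { assert (0 < gamma^2) by (apply pow_lt; lra). nra. }
  assert (HPZ := PZ k d Hs0). fold s in HPZ.
  assert (Htau0 : 0 < tau). { rewrite Htau. assert (0 < INR b ^ 2) by (apply pow_lt; lra).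
    apply Rmult_lt_0_compat; [nra|lra]. }
  unfold A1.
  apply (Rle_trans _ (ExpH k (fun σ => 1 + (eta - 1) *
        (if Rle_dec (s / 2) ((Zd d k σ)^2) then 1 else 0)))).
  - apply Exp_mono. intros; lra. intros σ.
    destruct Rle_dec as [h|h].
    + assert (HQ := Q_minus_t eps k p σ Hd Hk). fold d in HQ.
      set (c := aeps eps - / 2) in *.
      set (Z := Zd d k σ) in *.
      assert (Hm : mu2 <= (Qf eps k p σ - tf eps k σ)^2).
      { rewrite HQ, Hmu. replace ((c * Z)^2) with (c^2 * Z^2) by ring.
        apply Rmult_le_compat_l. apply pow2_ge_0.
        apply (Rle_trans _ (s / 2)); auto.
        apply (Rmult_le_reg_l (INR k)); auto. field_simplify; lra. }
      assert (Hm2 : INR b ^ 2 * mu2 <= INR b ^ 2 * (Qf eps k p σ - tf eps k σ)^2).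
      { apply Rmult_le_compat_l; auto. apply pow2_ge_0. }
      assert (HG := G_far eps k p b tau σ Hd Htau0 ltac:(lra)).
      assert (INR b / (INR b ^ 2 * (Qf eps k p σ - tf eps k σ) ^ 2) <= eta).
      { unfold eta. unfold Rdiv. apply Rmult_le_compat_l; [lra|].
        apply Rinv_le_contravar; auto. assert (0 < INR b ^ 2) by (apply pow_lt; lra). nra. }
      lra.
    + destruct (G_range eps k p b tau σ Hd). lra.
  - rewrite Exp_plus, Exp_const, Exp_scal.
    assert (0 <= 1 - eta) by lra.
    assert ((1 - eta) * / 12 <= (1 - eta) * ExpH k (fun σ => if Rle_dec (s / 2) (Zd d k σ ^ 2) then 1 else 0)).
    { apply Rmult_le_compat_l; lra. }
    lra.
Qed.

Definition qs eps k (p : nat -> R) b (s : list bool) (j : nat) : R :=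
  rsum k (fun x => p x * rr eps (nth ((j / b) * k + x) s false)).

Fixpoint acc eps k b tau (r : nat) (s z : list bool) : R :=
  match r with
  | O => 1
  | S r' => test eps k b tau (firstn k s) (firstn b z) * acc eps k b tau r' (skipn k s) (skipn b z)
  end.

Lemma struct eps k p b tau : (0 < b)%nat -> forall r n', (r * b <= n')%nat ->
  ExpH (r * k) (fun s => Exp (qs eps k p b s) n' (acc eps k b tau r s)) = (A1 eps k p b tau) ^ r.
Proof.
  intros Hb r; induction r; intros n' Hn.
  - simpl. rewrite Exp_0. apply Exp_const.
  - replace n' with (b + (n' - b))%nat by (simpl in Hn; lia).
    change (S r * k)%nat with (k + r * k)%nat.
    rewrite (Exp_ext _ _ _ (fun s => Gf eps k p b tau (firstn k s) *
               Exp (qs eps k p b (skipn k s)) (n' - b) (acc eps k b tau r (skipn k s)))).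
    + rewrite (Exp_split _ k (r * k) (Gf eps k p b tau)
        (fun s' => Exp (qs eps k p b s') (n' - b) (acc eps k b tau r s'))). cbv beta. rewrite IHr by (simpl in Hn; lia). reflexivity.
    + intros s. simpl acc.
      rewrite (Exp_split _ b (n' - b) (test eps k b tau (firstn k s)) (acc eps k b tau r (skipn k s))). unfold Gf. f_equal.
      * apply Exp_ext_q. intros j Hj. unfold qs, Qf. apply rsum_ext; intros x Hx.
        rewrite Nat.div_small by lia. rewrite nth_firstn.
        replace (x <? k)%nat with true by (symmetry; apply Nat.ltb_lt; auto). reflexivity.
      * apply Exp_ext_q. intros j Hj. unfold qs. apply rsum_ext; intros x Hx.
        rewrite nth_skipn. f_equal. f_equal.
        replace (b + j)%nat with (1 * b + j)%nat by lia.
        rewrite Nat.div_add_l by lia. f_equal; lia.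
Qed.

Definition mkP eps k b tau : protocol := {|
  nshared := 2 ^ (16 * k);
  wshared := fun _ => / 2 ^ (16 * k);
  chan := fun j v x => rr eps (nth ((j / b) * k + x) (decode (16 * k) v) false);
  decide := fun v z => acc eps k b tau 16 (decode (16 * k) v) z
|}.

Lemma accept_eq eps k p b tau n : (0 < b)%nat -> (16 * b <= n)%nat ->
  accept_prob n k p (mkP eps k b tau) = (A1 eps k p b tau) ^ 16.
Proof.
  intros Hb Hn.
  transitivity (rsum (2 ^ (16 * k)) (fun v => / 2 ^ (16 * k) *
     (fun s => Exp (qs eps k p b s) n (acc eps k b tau 16 s)) (decode (16 * k) v))).
  - reflexivity.
  - rewrite (rsum_decode (16 * k) (fun s => Exp (qs eps k p b s) n (acc eps k b tau 16 s))).
    apply struct; auto.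
Qed.

Lemma bern x n : 0 <= x <= 1 -> 1 - INR n * x <= (1 - x) ^ n.
Proof.
  intros Hx. induction n.
  - simpl; lra.
  - rewrite S_INR. simpl pow. assert (0 <= INR n) by apply pos_INR.
    assert (0 <= INR n * x * x) by (apply Rmult_le_pos; [apply Rmult_le_pos|]; lra).
    nra.
Qed.

Lemma rr_ldp eps b b' : 0 <= eps -> rr eps b <= exp eps * rr eps b'.
Proof.
  intros He. assert (1 <= exp eps) by (pose proof (exp_ineq1_le eps); lra).
  assert (0 < exp eps) by apply exp_pos.
  unfold rr, aeps. destruct b, b'.
  - assert (0 < exp eps / (1 + exp eps)) by (apply Rdiv_lt_0_compat; lra). nra.
  - right. field. lra.
  - apply (Rmult_le_reg_l (1 + exp eps)); [lra|]. field_simplify; try lra. nra.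
  - assert (0 < 1 - exp eps / (1 + exp eps)).
    { replace (1 - exp eps / (1 + exp eps)) with (/ (1 + exp eps)) by (field; lra).
      apply Rinv_0_lt_compat; lra. }
    nra.
Qed.

Lemma rr_neg eps b : 1 - rr eps b = rr eps (negb b).
Proof. destruct b; simpl; ring. Qed.

Lemma c_bound eps : 0 < eps <= 1 -> eps / 8 <= aeps eps - / 2.
Proof.
  intros He. assert (H1 := exp_ineq1_le eps).
  assert (H3 : exp eps <= 3).
  { destruct (Req_dec eps 1) as [->|]. apply exp_le_3.
    left. apply Rlt_le_trans with (exp 1). apply exp_increasing; lra. apply exp_le_3. }
  unfold aeps. set (e := exp eps) in *.
  replace (e / (1 + e) - / 2) with ((e - 1) / (2 * (1 + e))) by (field; lra).
  replace (eps / 8) with ((2 * (1 + e) * eps / 8) / (2 * (1 + e))) by (field; lra).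
  unfold Rdiv. apply Rmult_le_compat_r. left; apply Rinv_0_lt_compat; lra.
  assert (2 * (1 + e) * eps <= 8 * eps) by nra. lra.
Qed.

Lemma pow16_small y : 0 <= y <= 1101 / 1200 -> y ^ 16 <= 1 / 3.
Proof.
  intros Hy.
  assert (H2 : y ^ 2 <= 85 / 100) by nra.
  assert (H4 : y ^ 4 <= 73 / 100). { replace (y^4) with ((y^2)^2) by ring.
    assert (0 <= y^2) by apply pow2_ge_0. nra. }
  assert (H8 : y ^ 8 <= 54 / 100). { replace (y^8) with ((y^4)^2) by ring.
    assert (0 <= y^4) by (replace (y^4) with ((y^2)^2) by ring; apply pow2_ge_0). nra. }
  replace (y^16) with ((y^8)^2) by ring.
  assert (0 <= y^8) by (replace (y^8) with ((y^4)^2) by ring; apply pow2_ge_0). nra.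
Qed.

Lemma acc_range eps k b tau r s z : 0 <= acc eps k b tau r s z <= 1.
Proof.
  revert s z; induction r; intros s z; simpl; [lra|].
  specialize (IHr (skipn k s) (skipn b z)).
  unfold test; destruct Rle_dec; lra.
Qed.

Theorem theorem4p2 :
  exists C : R, C > 0 /\
    forall (k : nat) (gamma eps : R) (n : nat),
      (2 <= k)%nat -> Nat.Even k ->
      0 < gamma <= 1 -> 0 < eps <= 1 ->
      INR n >= C * INR k / (gamma ^ 2 * eps ^ 2) ->
      exists P : protocol,
        valid_protocol n k P /\ is_LDP eps n k P /\ uniformity_tester n k gamma P.
Proof.
  exists 1000000. split; [lra|].
  intros k gamma eps n Hk _ Hg He Hn.
  set (b := (n / 16)%nat).
  set (c := aeps eps - / 2).
  set (mu2 := c ^ 2 * (2 * gamma ^ 2 / INR k)).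
  set (tau := INR b ^ 2 * mu2 / 4).
  exists (mkP eps k b tau).
  assert (HK : 2 <= INR k) by (replace 2 with (INR 2) by reflexivity; apply le_INR; auto).
  assert (Hc : eps / 8 <= c) by (apply c_bound; auto).
  assert (Hge : 0 < gamma ^ 2 * eps ^ 2).
  { apply Rmult_lt_0_compat; apply pow_lt; lra. }
  assert (Hge1 : gamma ^ 2 * eps ^ 2 <= 1).
  { assert (gamma^2 <= 1) by nra. assert (eps^2 <= 1) by nra.
    assert (0 <= gamma^2) by apply pow2_ge_0. assert (0 <= eps^2) by apply pow2_ge_0. nra. }
  assert (Hn1 : INR n * (gamma ^ 2 * eps ^ 2) >= 1000000 * INR k).
  { apply Rle_ge. apply Rge_le in Hn.
    apply (Rmult_le_compat_r (gamma ^ 2 * eps ^ 2)) in Hn; [|lra].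
    replace (1000000 * INR k / (gamma ^ 2 * eps ^ 2) * (gamma ^ 2 * eps ^ 2)) with (1000000 * INR k) in Hn
      by (field; lra). lra. }
  assert (Hn2 : INR n >= 2000000). { assert (0 <= INR n) by apply pos_INR. nra. }
  assert (Hbn : 16 * INR b >= INR n - 15).
  { assert (E := Nat.div_mod n 16 ltac:(lia)). assert (M := Nat.mod_upper_bound n 16 ltac:(lia)).
    fold b in E. rewrite E at 1. rewrite plus_INR, mult_INR.
    assert (INR (n mod 16) <= 15). { replace 15 with (INR 15) by (simpl; lra). apply le_INR. lia. }
    simpl (INR 16). lra. }
  assert (HB : INR b >= INR n / 32) by lra.
  assert (Hb0 : (0 < b)%nat).
  { destruct b eqn:E. simpl in HB. lra. lia. }
  assert (HB0 : 0 < INR b) by (apply lt_0_INR; auto).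
  assert (Hbn16 : (16 * b <= n)%nat) by (apply Nat.Div0.mul_div_le).
  assert (Hc0 : 0 < c) by lra.
  assert (Hmu : eps ^ 2 * gamma ^ 2 / (32 * INR k) <= mu2).
  { unfold mu2. assert ((eps / 8)^2 <= c ^ 2) by (apply pow_incr; lra).
    replace (eps ^ 2 * gamma ^ 2 / (32 * INR k)) with ((eps/8)^2 * (2 * gamma ^ 2 / INR k)) by (field; lra).
    apply Rmult_le_compat_r; auto. apply Rmult_le_pos. assert (0 <= gamma^2) by apply pow2_ge_0. lra.
    left; apply Rinv_0_lt_compat; lra. }
  assert (Hmu0 : 0 < mu2).
  { eapply Rlt_le_trans; [|exact Hmu]. apply Rdiv_lt_0_compat; lra. }
  set (eta := INR b / (INR b ^ 2 * mu2)).
  assert (Heta : eta <= / 100).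
  { unfold eta. replace (INR b / (INR b ^ 2 * mu2)) with (/ (INR b * mu2)) by (field; lra).
    apply Rinv_le_contravar; [lra|].
    assert (INR b * mu2 >= INR b * (eps ^ 2 * gamma ^ 2 / (32 * INR k))) by
      (apply Rle_ge; apply Rmult_le_compat_l; lra).
    assert (INR b * (eps ^ 2 * gamma ^ 2 / (32 * INR k)) >= 100).
    { replace (INR b * (eps ^ 2 * gamma ^ 2 / (32 * INR k))) with
        (INR b * (gamma ^ 2 * eps ^ 2) / (32 * INR k)) by (field; lra).
      apply Rle_ge. apply (Rmult_le_reg_r (32 * INR k)); [lra|].
      replace (INR b * (gamma ^ 2 * eps ^ 2) / (32 * INR k) * (32 * INR k)) with
        (INR b * (gamma ^ 2 * eps ^ 2)) by (field; lra).
      assert (INR b * (gamma ^ 2 * eps ^ 2) >= INR n / 32 * (gamma ^ 2 * eps ^ 2)) by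
        (apply Rle_ge; apply Rmult_le_compat_r; lra).
      lra. }
    lra. }
  assert (Heta0 : 0 <= eta).
  { unfold eta. apply Rmult_le_pos; [lra|]. left; apply Rinv_0_lt_compat.
    apply Rmult_lt_0_compat; [apply pow_lt|]; lra. }
  assert (Htau : 0 < tau).
  { unfold tau. assert (0 < INR b ^ 2) by (apply pow_lt; lra).
    apply Rmult_lt_0_compat; [nra|lra]. }
  assert (Htau_eta : INR b / (4 * tau) = eta).
  { unfold eta, tau. field. lra. }
  split; [|split].
  -
    split; [|split; [|split]].
    + intros v _. simpl. left. apply Rinv_0_lt_compat, pow_lt; lra.
    + change (rsum (2 ^ (16 * k)) (fun _ => / 2 ^ (16 * k)) = 1).
      rewrite rsum_const, pow_INR. replace (INR 2) with 2 by reflexivity. field. apply pow_nonzero; lra.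
    + intros j v x _ _ _. simpl. apply rr_range.
    + intros v z _. apply acc_range.
  -
    intros j v x x' _ _ _ _. simpl. split.
    + apply rr_ldp; lra.
    + rewrite !rr_neg. apply rr_ldp; lra.
  -
    intros p Hd. rewrite accept_eq by auto. split.
    + intros Hu. assert (HA := A1_unif eps k p b tau Hd Hu Htau). rewrite Htau_eta in HA.
      assert (H0 : 0 <= 1 - eta) by lra.
      assert ((1 - eta) ^ 16 <= A1 eps k p b tau ^ 16) by (apply pow_incr; lra).
      assert (HB' := bern eta 16 ltac:(lra)). simpl (INR 16) in HB'. lra.
    + intros Hfar.
      assert (HA := A1_far eps k p b tau gamma mu2 Hd ltac:(lia) ltac:(lra) Hfar
                       eq_refl Hmu0 Hb0 eq_refl ltac:(fold eta; lra)).
      fold eta in HA. destruct (A1_range eps k p b tau Hd).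
      assert (A1 eps k p b tau ^ 16 <= 1/3) by (apply pow16_small; lra). lra.
Qed.
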